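(* Let $T_\sigma$ be a binary separating tree of a separable permutation $\sigma$ of size $k$, and let $\tau=\tau_1\cdots\tau_n$ be a permutation. Define, for each node $V$ of $T_\sigma$ and integers $i,j,a,b$, a pattern $M(V,i,j,a,b)$ as follows. If $i>j$ or $a>b$, $M(V,i,j,a,b)=\epsilon$ (empty pattern). Otherwise ($1\le i\le j\le n$, $1\le a\le b\le n$): if $V$ is a leaf, $M(V,i,j,a,b)=1$ if there is $h\in\{i,\dots,j\}$ with $a\le\tau_h\le b$ and $\epsilon$ otherwise; if $V$ is an internal node with left child $V_L$ and right child $V_R$, processed after its children, then $M(V,i,j,a,b)=\mathrm{Longest}\{M(V_L,i,h-1,a,c-1)\oplus M(V_R,h,j,c,b): i\le h\le j+1,\ a\le c\le b+1\}$ if $V$ is labeled $+$, and $M(V,i,j,a,b)=\mathrm{Longest}\{M(V_L,i,h-1,c,b)\ominus M(V_R,h,j,a,c-1): i\le h\le j+1,\ a\le c\le b+1\}$ if $V$ is labeled $-$. Then $M(\text{root of }T_\sigma,1,n,1,n)$ is a longest common pattern of $\sigma$ and $\tau$.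
   Context: A permutation $\pi=\pi_1\cdots\pi_k$ is a pattern of $\sigma$ if some subsequence of $\sigma$ is order-isomorphic to $\pi$; a longest common pattern of $\sigma$ and $\tau$ is a permutation of maximum length that is a pattern of both. A permutation is separable if it avoids $3\,1\,4\,2$ and $2\,4\,1\,3$. A binary separating tree of $\sigma=\sigma_1\cdots\sigma_k$ is an ordered binary tree with $k$ leaves (read left to right as $\sigma_1,\dots,\sigma_k$), internal nodes labeled $+$ or $-$, such that the entries below each node have values forming an interval and, at a $+$ (resp. $-$) node, values below the left child are all smaller (resp. larger) than those below the right child. For patterns $\pi$ of length $k$ and $\pi'$ of length $k'$: $\pi\oplus\pi'=\pi_1\cdots\pi_k(\pi'_1+k)\cdots(\pi'_{k'}+k)$ and $\pi\ominus\pi'=(\pi_1+k')\cdots(\pi_k+k')\pi'_1\cdots\pi'_{k'}$. $\mathrm{Longest}(S)$ denotes an element of maximal length of the finite set $S$ of patterns (e.g. the lexicographically smallest among those of maximal length). *)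

(* Defs.v *)
From mathcomp Require Import all_boot.
Set Implicit Arguments. Unset Strict Implicit. Unset Printing Implicit Defensive.

Definition is_perm (s : seq nat) : bool := perm_eq s (iota 1 (size s)).

Definition order_iso (s t : seq nat) : Prop :=
  size s = size t /\
  forall i j, i < size s -> j < size s ->
    (nth 0 s i < nth 0 s j) = (nth 0 t i < nth 0 t j).

Definition is_pattern (pi sigma : seq nat) : Prop :=
  exists s, subseq s sigma /\ order_iso s pi.

Definition separable (sigma : seq nat) : Prop :=
  is_perm sigma /\ ~ is_pattern [:: 3; 1; 4; 2] sigma /\ ~ is_pattern [:: 2; 4; 1; 3] sigma.

Definition longest_common_pattern (pi sigma tau : seq nat) : Prop :=
  [/\ is_perm pi, is_pattern pi sigma, is_pattern pi tau &
      forall pi', is_perm pi' -> is_pattern pi' sigma -> is_pattern pi' tau ->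
        size pi' <= size pi].

Definition psum (p q : seq nat) : seq nat := p ++ map (fun x => x + size p) q.
Definition msum (p q : seq nat) : seq nat := map (fun x => x + size q) p ++ q.

Inductive sign := Plus | Minus.
Inductive tree := Leaf | Node of sign & tree & tree.

Fixpoint nleaves (T : tree) : nat :=
  match T with Leaf => 1 | Node _ L R => nleaves L + nleaves R end.

(* values of sigma at (0-based) positions s, ..., s+n-1 *)
Definition block (sigma : seq nat) (s n : nat) : seq nat := take n (drop s sigma).

Definition is_interval (l : seq nat) : bool :=
  perm_eq l (iota (foldr minn (head 0 l) l) (size l)).

(* T, whose leaves are positions s, s+1, ... (0-based) of sigma, satisfies
   the separating-tree conditions at every node *)
Fixpoint sep_at (sigma : seq nat) (T : tree) (s : nat) : bool :=
  match T with
  | Leaf => true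
  | Node sg L R =>
      let lv := block sigma s (nleaves L) in
      let rv := block sigma (s + nleaves L) (nleaves R) in
      [&& is_interval (lv ++ rv),
          (match sg with
           | Plus => allrel (fun x y => x < y) lv rv
           | Minus => allrel (fun x y => x > y) lv rv end),
          sep_at sigma L s & sep_at sigma R (s + nleaves L)]
  end.

Definition separating_tree (sigma : seq nat) (T : tree) : bool :=
  (nleaves T == size sigma) && sep_at sigma T 0.

Definition longest_selector (Longest : seq (seq nat) -> seq nat) : Prop :=
  forall S : seq (seq nat), S != [::] ->
    Longest S \in S /\ forall x, x \in S -> size x <= size (Longest S).

(* the dynamic programme M(V,i,j,a,b); tau is 1-indexed: tau_h = nth 0 tau h.-1 *)
Fixpoint M (tau : seq nat) (Longest : seq (seq nat) -> seq nat)
    (V : tree) (i j a b : nat) : seq nat :=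
  if (j < i) || (b < a) then [::] else
  match V with
  | Leaf =>
      if has (fun h => a <= nth 0 tau h.-1 <= b) (index_iota i j.+1)
      then [:: 1] else [::]
  | Node Plus L R =>
      Longest [seq psum (M tau Longest L i h.-1 a c.-1) (M tau Longest R h j c b)
              | h <- index_iota i j.+2, c <- index_iota a b.+2]
  | Node Minus L R =>
      Longest [seq msum (M tau Longest L i h.-1 c b) (M tau Longest R h j a c.-1)
              | h <- index_iota i j.+2, c <- index_iota a b.+2]
  end.

(* Main.v *)
Require Import Defs.
From mathcomp Require Import all_boot zify.
Set Implicit Arguments. Unset Strict Implicit. Unset Printing Implicit Defensive.

Lemma oi_sym s t : order_iso s t -> order_iso t s.
Proof. by case=> E H; split=> // i j; rewrite -E => Hi Hj; rewrite H. Qed.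

Lemma oi_trans s t u : order_iso s t -> order_iso t u -> order_iso s u.
Proof.
case=> E1 H1 [E2 H2]; split; first by rewrite E1.
by move=> i j Hi Hj; rewrite H1 // H2 // -E1.
Qed.

Lemma oi_take k s t : order_iso s t -> order_iso (take k s) (take k t).
Proof.
case=> E H; split; first by rewrite !size_take E.
move=> i j; rewrite size_take_min => Hi Hj.
have Hik : i < k by lia.
have Hjk : j < k by lia.
have Hi' : i < size s by lia.
have Hj' : j < size s by lia.
by rewrite !nth_take // H.
Qed.

Lemma oi_drop k s t : order_iso s t -> order_iso (drop k s) (drop k t).
Proof.
case=> E H; split; first by rewrite !size_drop E.
move=> i j; rewrite size_drop => Hi Hj.
by rewrite !nth_drop H //; lia.
Qed.

Lemma oi_shift d s t : order_iso s t -> order_iso s (map (fun x => x + d) t).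
Proof.
case=> E H; split; first by rewrite size_map.
move=> i j Hi Hj; rewrite !(nth_map 0) -?E // H //; by rewrite ltn_add2r.
Qed.

Lemma oi_cat s1 s2 p1 p2 : order_iso s1 p1 -> order_iso s2 p2 ->
  (forall i j, i < size s1 -> j < size s2 ->
     (nth 0 s1 i < nth 0 s2 j) = (nth 0 p1 i < nth 0 p2 j) /\
     (nth 0 s2 j < nth 0 s1 i) = (nth 0 p2 j < nth 0 p1 i)) ->
  order_iso (s1 ++ s2) (p1 ++ p2).
Proof.
case=> E1 H1 [E2 H2] C; split; first by rewrite !size_cat E1 E2.
move=> i j; rewrite size_cat => Hi Hj; rewrite !nth_cat -E1.
case: (ltnP i (size s1)) => Hi1; case: (ltnP j (size s1)) => Hj1.
- exact: H1.
- by case: (C i (j - size s1)) => //; lia.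
- by case: (C j (i - size s1)) => //; lia.
- by apply: H2; lia.
Qed.

Lemma oi_cross s1 s2 p1 p2 : order_iso (s1 ++ s2) (p1 ++ p2) -> size s1 = size p1 ->
  forall i j, i < size s1 -> j < size s2 ->
     (nth 0 s1 i < nth 0 s2 j) = (nth 0 p1 i < nth 0 p2 j) /\
     (nth 0 s2 j < nth 0 s1 i) = (nth 0 p2 j < nth 0 p1 i).
Proof.
case=> E H E1 i j Hi Hj.
have := H i (size s1 + j); have := H (size s1 + j) i.
rewrite !nth_cat size_cat -E1 Hi.
have -> : (size s1 + j < size s1) = false by lia.
rewrite addKn.
move=> A B; split; [apply: B|apply: A]; lia.
Qed.

Lemma pat_size p X : is_pattern p X -> size p <= size X.
Proof. by case=> s [/size_subseq H [<- _]]. Qed.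

Lemma pat_sub p X Y : is_pattern p X -> subseq X Y -> is_pattern p Y.
Proof. by case=> s [H1 H2] H; exists s; split=> //; apply: subseq_trans H. Qed.

Lemma pat_nil X : is_pattern [::] X.
Proof. by exists [::]; split; [apply: sub0seq | split]. Qed.

Lemma perm_nil : is_perm [::].
Proof. by []. Qed.

Lemma pat1 x X : x \in X -> is_pattern [:: 1] X.
Proof.
move=> H; exists [:: x]; split; first by rewrite sub1seq.
split=> // i j; rewrite /= !ltnS !leqn0 => /eqP -> /eqP -> /=; by rewrite !ltnn.
Qed.

Lemma subseq_cat_split (s x y : seq nat) : subseq s (x ++ y) ->
  exists s1 s2, [/\ s = s1 ++ s2, subseq s1 x & subseq s2 y].
Proof.
case/subseqP=> m Hm ->; rewrite -(cat_take_drop (size x) m) mask_cat; last first.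
  by rewrite size_take_min Hm size_cat; apply/minn_idPl; apply: leq_addr.
by exists (mask (take (size x) m) x), (mask (drop (size x) m) y); split => //; apply: mask_subseq.
Qed.

Lemma subseq_cat_take (t1 t2 y : seq nat) : subseq (t1 ++ t2) y ->
  exists m, subseq t1 (take m y) /\ subseq t2 (drop m y).
Proof.
elim: y t1 => [|x y IH] [|z t1] /=.
- by move=> H; exists 0.
- by case: t1.
- by move=> H; exists 0; rewrite sub0seq drop0.
- case: eqP => [->|_] H.
  + by case: (IH _ H) => m [H1 H2]; exists m.+1 => /=; rewrite eqxx.
  + case: (IH (z :: t1) H) => m [H1 H2]; exists m.+1 => /=; split => //.
    by apply: subseq_trans H1 (subseq_cons _ _).
Qed.

Lemma perm_vals p x : is_perm p -> x \in p -> 0 < x <= size p.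
Proof.
by rewrite /is_perm => /perm_mem -> ; rewrite mem_iota; lia.
Qed.

Lemma psum_perm p q : is_perm p -> is_perm q -> is_perm (psum p q).
Proof.
rewrite /is_perm /psum => Hp Hq.
rewrite size_cat size_map iotaD.
apply: perm_cat => //.
rewrite addnC iotaDl.
have -> : map (fun x => x + size p) q = map (addn (size p)) q by apply: eq_map => x; rewrite addnC.
exact: perm_map.
Qed.

Lemma msum_perm p q : is_perm p -> is_perm q -> is_perm (msum p q).
Proof.
rewrite /is_perm /msum => Hp Hq.
rewrite size_cat size_map addnC iotaD.
rewrite perm_catC; apply: perm_cat => //.
rewrite addnC iotaDl.
have -> : map (fun x => x + size q) p = map (addn (size q)) p by apply: eq_map => x; rewrite addnC.
exact: perm_map.
Qed.

Lemma psum_pat p q X Y : is_perm p -> is_perm q -> is_pattern p X -> is_pattern q Y ->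
  allrel (fun x y => x < y) X Y -> is_pattern (psum p q) (X ++ Y).
Proof.
move=> Pp Pq [s1 [S1 O1]] [s2 [S2 O2]] /allrelP R.
exists (s1 ++ s2); split; first exact: cat_subseq.
apply: oi_cat => //; first exact: oi_shift.
move=> i j Hi Hj.
have E1 := O1.1; have E2 := O2.1.
have a1 : nth 0 s1 i \in X by apply: (mem_subseq S1); apply: mem_nth.
have a2 : nth 0 s2 j \in Y by apply: (mem_subseq S2); apply: mem_nth.
have c1 : 0 < nth 0 p i <= size p by apply: perm_vals Pp _; apply: mem_nth; rewrite -E1.
have c2 : 0 < nth 0 q j <= size q by apply: perm_vals Pq _; apply: mem_nth; rewrite -E2.
have := R _ _ a1 a2; rewrite (nth_map 0) -?E2 //.
move=> c3.
have -> : (nth 0 s1 i < nth 0 s2 j) = true by [].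
have -> : (nth 0 s2 j < nth 0 s1 i) = false by lia.
have -> : (nth 0 p i < nth 0 q j + size p) = true by lia.
have -> : (nth 0 q j + size p < nth 0 p i) = false by lia.
by [].
Qed.

Lemma msum_pat p q X Y : is_perm p -> is_perm q -> is_pattern p X -> is_pattern q Y ->
  allrel (fun x y => x > y) X Y -> is_pattern (msum p q) (X ++ Y).
Proof.
move=> Pp Pq [s1 [S1 O1]] [s2 [S2 O2]] /allrelP R.
exists (s1 ++ s2); split; first exact: cat_subseq.
apply: oi_cat => //; first exact: oi_shift.
move=> i j Hi Hj.
have E1 := O1.1; have E2 := O2.1.
have a1 : nth 0 s1 i \in X by apply: (mem_subseq S1); apply: mem_nth.
have a2 : nth 0 s2 j \in Y by apply: (mem_subseq S2); apply: mem_nth.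
have c1 : 0 < nth 0 p i <= size p by apply: perm_vals Pp _; apply: mem_nth; rewrite -E1.
have c2 : 0 < nth 0 q j <= size q by apply: perm_vals Pq _; apply: mem_nth; rewrite -E2.
have := R _ _ a1 a2; rewrite (nth_map 0) -?E1 //.
move=> c3.
have -> : (nth 0 s1 i < nth 0 s2 j) = false by lia.
have -> : (nth 0 s2 j < nth 0 s1 i) = true by [].
have -> : (nth 0 p i + size q < nth 0 q j) = false by lia.
have -> : (nth 0 q j < nth 0 p i + size q) = true by lia.
by [].
Qed.

Definition pos (tau : seq nat) i j := [seq nth 0 tau h.-1 | h <- index_iota i j.+1].
Definition reg (tau : seq nat) i j a b := [seq x <- pos tau i j | a <= x <= b].

Lemma reg_sub tau i j a b t :
  subseq t (reg tau i j a b) = all (fun x => a <= x <= b) t && subseq t (pos tau i j).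
Proof. exact: subseq_filter. Qed.

Lemma pos_split tau i j h : 0 < i -> i <= h <= j.+1 ->
  pos tau i j = pos tau i h.-1 ++ pos tau h j.
Proof.
move=> Hi Hh; rewrite /pos -map_cat /index_iota.
have -> : h.-1.+1 = h by lia.
have -> : j.+1 - i = (h - i) + (j.+1 - h) by lia.
by rewrite iotaD; congr (map _ (_ ++ iota _ _)); lia.
Qed.

Lemma pos_split_ex tau i j (t1 t2 : seq nat) : 0 < i -> i <= j.+1 ->
  subseq (t1 ++ t2) (pos tau i j) ->
  exists h, [/\ i <= h <= j.+1, subseq t1 (pos tau i h.-1) & subseq t2 (pos tau h j)].
Proof.
move=> Hi Hij /subseq_cat_take [m [H1 H2]].
have Hs : size (pos tau i j) = j.+1 - i by rewrite size_map size_iota.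
case: (leqP m (j.+1 - i)) => Hm.
  exists (i + m); split; first lia.
  + move: H1; rewrite /pos -map_take /index_iota take_iota.
    have -> : minn m (j.+1 - i) = m by apply/minn_idPl.
    by have -> : (i + m).-1.+1 - i = m by lia.
  + move: H2; rewrite /pos -map_drop /index_iota drop_iota.
    by have -> : j.+1 - (i + m) = j.+1 - i - m by lia.
exists j.+1; split; first lia.
+ move: H1; rewrite take_oversize; last by rewrite Hs; lia.
  by rewrite /=.
+ move: H2; rewrite drop_oversize; last by rewrite Hs; lia.
  by rewrite subseq0 => /eqP ->; rewrite sub0seq.
Qed.

Lemma reg_empty tau i j a b : (j < i) || (b < a) -> reg tau i j a b = [::].
Proof.
case/orP=> H.
  by rewrite /reg /pos /index_iota (_ : j.+1 - i = 0) //; lia.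
apply/eqP; rewrite -[_ == _]negbK -has_filter; apply/hasPn => x _; lia.
Qed.

Lemma maxl_ge (t : seq nat) x : x \in t -> x <= foldr maxn 0 t.
Proof.
elim: t => //= y t IH; rewrite inE => /orP [/eqP ->|/IH]; lia.
Qed.

Lemma maxl_lt (t : seq nat) y : 0 < y -> (forall x, x \in t -> x < y) -> foldr maxn 0 t < y.
Proof.
move=> H0; elim: t => //= z t IH H.
have := H z (mem_head _ _); have := IH (fun x Hx => H x ((mem_behead (s := z :: t) Hx))); lia.
Qed.

Definition rb (b : bool) (x y : nat) := if b then x < y else y < x.

Lemma pat_split (up : bool) (p X Y Z : seq nat) :
  is_pattern p (X ++ Y) -> allrel (rb up) X Y -> is_pattern p Z ->
  exists k t1 t2, [/\ is_pattern (take k p) X, is_pattern (drop k p) Y,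
    subseq (t1 ++ t2) Z, order_iso t1 (take k p) /\ order_iso t2 (drop k p)
    & allrel (rb up) t1 t2].
Proof.
move=> [s [Ss Os]] /allrelP R [t [St Ot]].
case: (subseq_cat_split Ss) => s1 [s2 [Es S1 S2]]; subst s.
have Ep := Os.1; have Et := Ot.1; rewrite size_cat in Ep.
exists (size s1), (take (size s1) t), (drop (size s1) t); split.
- by exists s1; split => //; have := oi_take (size s1) Os; rewrite take_size_cat.
- by exists s2; split => //; have := oi_drop (size s1) Os; rewrite drop_size_cat.
- by rewrite cat_take_drop.
- by split; [apply: oi_take | apply: oi_drop].
apply/allrelP => x y /nthP - /(_ 0) [i Hi <-] /nthP - /(_ 0) [j Hj <-].
have O : order_iso (take (size s1) t ++ drop (size s1) t) (s1 ++ s2).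
  by rewrite cat_take_drop; apply: oi_trans Ot (oi_sym Os).
have Esz : size (take (size s1) t) = size s1 by rewrite size_takel // Et; lia.
have Hi' : i < size s1 by rewrite -Esz.
have Hj' : j < size s2 by move: Hj; rewrite size_drop Et; lia.
have [C1 C2] := oi_cross O Esz Hi Hj.
have := R _ _ (mem_subseq S1 (mem_nth 0 Hi')) (mem_subseq S2 (mem_nth 0 Hj')).
by rewrite /rb; case: (up); rewrite ?C1 ?C2.
Qed.

Lemma block_split sigma s n1 n2 :
  block sigma s (n1 + n2) = block sigma s n1 ++ block sigma (s + n1) n2.
Proof. by rewrite /block takeD drop_drop addnC. Qed.

Lemma block_leaf (sigma : seq nat) s : s < size sigma -> block sigma s 1 = [:: nth 0 sigma s].
Proof. by move=> H; rewrite /block (drop_nth 0 H) take_cons take0. Qed.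

Lemma reg_cat_sub tau i j a b h aL bL aR bR : 0 < i -> i <= h <= j.+1 ->
  a <= aL -> bL <= b -> a <= aR -> bR <= b ->
  subseq (reg tau i h.-1 aL bL ++ reg tau h j aR bR) (reg tau i j a b).
Proof.
move=> Hi Hh H1 H2 H3 H4; rewrite reg_sub; apply/andP; split.
  rewrite all_cat; apply/andP; split; apply/allP => x; rewrite mem_filter; lia.
by rewrite (pos_split tau Hi Hh); apply: cat_subseq; apply: filter_subseq.
Qed.

Lemma sub_reg tau t i j a b : all (fun x => a <= x <= b) t -> subseq t (pos tau i j) ->
  subseq t (reg tau i j a b).
Proof. by move=> H1 H2; rewrite reg_sub H1. Qed.

Lemma pat_of t q Z : subseq t Z -> order_iso t q -> is_pattern q Z.
Proof. by move=> H1 H2; exists t. Qed.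

Lemma reg_vals tau i j a b x : x \in reg tau i j a b -> a <= x <= b.
Proof. by rewrite mem_filter => /andP []. Qed.

Ltac plia := repeat match goal with H : _ |- _ => clear H end; lia.

Definition inv tau Lg sigma V s i j a b :=
  let m := M tau Lg V i j a b in
  [/\ is_perm m, is_pattern m (block sigma s (nleaves V)),
      is_pattern m (reg tau i j a b) &
      forall p, is_pattern p (block sigma s (nleaves V)) ->
        is_pattern p (reg tau i j a b) -> size p <= size m].

Lemma inv_empty tau Lg sigma V s i j a b : (j < i) || (b < a) -> inv tau Lg sigma V s i j a b.
Proof.
move=> E; rewrite /inv.
have -> : M tau Lg V i j a b = [::] by case: V => [|[] L R] /=; rewrite E.
split; [done | exact: pat_nil | exact: pat_nil |].
by move=> p _; rewrite reg_empty // => /pat_size.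
Qed.

Lemma main tau Lg (HL : longest_selector Lg) sigma V : forall s, sep_at sigma V s ->
  s + nleaves V <= size sigma ->
  forall i j a b, 0 < i -> 0 < a -> inv tau Lg sigma V s i j a b.
Proof.
elim: V => [|sg L IHL R IHR] s Hsep Hs i j a b Hi Ha.
  case E: ((j < i) || (b < a)); first exact: inv_empty.
  rewrite /inv /= E block_leaf; last by move: Hs => /=; lia.
  case: ifP => Hh.
    split => //; first exact: pat1 (mem_head _ _).
      have : has (fun x => a <= x <= b) (pos tau i j) by rewrite has_map.
      by case/hasP => x Hx Px; apply: (@pat1 x); rewrite mem_filter Px.
    by move=> p /pat_size.
  have Hr : reg tau i j a b = [::].
    by apply/eqP; rewrite -[_ == _]negbK -has_filter has_map Hh.
  split => //; [exact: pat_nil | exact: pat_nil | by move=> p _; rewrite Hr => /pat_size].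
move: Hsep Hs => /= /and4P [_ Hrel HsL HsR] Hs.
have IL := IHL s HsL ltac:(lia).
have IR := IHR (s + nleaves L) HsR ltac:(lia).
case E: ((j < i) || (b < a)); first exact: inv_empty.
move: E => /negbT; rewrite negb_or -!leqNgt => /andP [Eij Eab].
rewrite /inv /= block_split.
have -> : (j < i) || (b < a) = false by lia.
have Eij' : i <= j.+1 by lia.
case: sg Hrel => Hrel.
- set S := [seq psum (M tau Lg L i h.-1 a c.-1) (M tau Lg R h j c b)
                   | h <- index_iota i j.+2, c <- index_iota a b.+2].
  have memS : forall h c, i <= h <= j.+1 -> a <= c <= b.+1 ->
      psum (M tau Lg L i h.-1 a c.-1) (M tau Lg R h j c b) \in S.
    move=> h c Hh Hc.
    apply: (allpairs_f (fun h c => psum (M tau Lg L i h.-1 a c.-1) (M tau Lg R h j c b)));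
      rewrite mem_index_iota; lia.
  have [HLin HLmax] : Lg S \in S /\ forall x, x \in S -> size x <= size (Lg S).
    apply: HL; apply/negP => /eqP ES.
    by have := memS i a ltac:(lia) ltac:(lia); rewrite ES.
  case/allpairsP: (HLin) => [[h c]] /= [Hh Hc EL].
  rewrite !mem_index_iota in Hh Hc.
  have Hh' : i <= h <= j.+1 by lia.
  have [P1 B1 R1 _] := IL i h.-1 a c.-1 Hi Ha.
  have [P2 B2 R2 _] := IR h j c b ltac:(lia) ltac:(lia).
  split.
  + by rewrite EL; apply: psum_perm.
  + by rewrite EL; apply: psum_pat.
  + rewrite EL; apply: (pat_sub _ (reg_cat_sub tau (a := a) (b := b) (aL := a) (bL := c.-1) (aR := c) (bR := b) Hi Hh' _ _ _ _)); try lia.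
    apply: psum_pat => //.
    by apply/allrelP => x y /reg_vals Hx /reg_vals Hy; lia.
  + move=> p Hp Hq.
    have [k [t1 [t2 [Q1 Q2 Sub [O1 O2] Rt]]]] := pat_split (up:=true) Hp Hrel Hq.
    move/allrelP: Rt => Rt.
    move: Sub; rewrite reg_sub all_cat => /andP [/andP [A1 A2] Sub].
    have [h1 [Hh1 Sp1 Sp2]] := pos_split_ex (tau := tau) Hi Eij' Sub.
    set c1 := maxn a (foldr maxn 0 t1).+1.
    have Mb : foldr maxn 0 t1 < b.+1.
      by apply: maxl_lt => // x Hx; have := allP A1 x Hx; plia.
    have Hc1 : a <= c1 <= b.+1 by rewrite /c1; move: Mb Eab; plia.
    have h1pos : 0 < h1 by move: Hi Hh1; plia.
    have c1pos : 0 < c1 by rewrite /c1; plia.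
    have T1 : subseq t1 (reg tau i h1.-1 a c1.-1).
      apply: sub_reg Sp1; apply/allP => x Hx.
      by have := maxl_ge Hx; have := allP A1 x Hx; rewrite /c1; plia.
    have T2 : subseq t2 (reg tau h1 j c1 b).
      apply: sub_reg Sp2; apply/allP => y Hy.
      have := allP A2 y Hy => /= Ay.
      have : foldr maxn 0 t1 < y by apply: maxl_lt; [move: Ay Ha; plia | move=> x Hx; exact: Rt].
      rewrite /c1; move: Ay; plia.
    have [_ _ _ U1] := IL i h1.-1 a c1.-1 Hi Ha.
    have [_ _ _ U2] := IR h1 j c1 b h1pos c1pos.
    have := U1 _ Q1 (pat_of T1 O1); have := U2 _ Q2 (pat_of T2 O2).
    have := HLmax _ (memS h1 c1 Hh1 Hc1).
    have -> : size p = size (take k p) + size (drop k p) by rewrite -size_cat cat_take_drop.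
    rewrite /psum size_cat size_map => A B C; exact: leq_trans (leq_add C B) A.
- set S := [seq msum (M tau Lg L i h.-1 c b) (M tau Lg R h j a c.-1)
                   | h <- index_iota i j.+2, c <- index_iota a b.+2].
  have memS : forall h c, i <= h <= j.+1 -> a <= c <= b.+1 ->
      msum (M tau Lg L i h.-1 c b) (M tau Lg R h j a c.-1) \in S.
    move=> h c Hh Hc.
    apply: (allpairs_f (fun h c => msum (M tau Lg L i h.-1 c b) (M tau Lg R h j a c.-1)));
      rewrite mem_index_iota; lia.
  have [HLin HLmax] : Lg S \in S /\ forall x, x \in S -> size x <= size (Lg S).
    apply: HL; apply/negP => /eqP ES.
    by have := memS i a ltac:(lia) ltac:(lia); rewrite ES.
  case/allpairsP: (HLin) => [[h c]] /= [Hh Hc EL].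
  rewrite !mem_index_iota in Hh Hc.
  have Hh' : i <= h <= j.+1 by lia.
  have [P1 B1 R1 _] := IL i h.-1 c b Hi ltac:(lia).
  have [P2 B2 R2 _] := IR h j a c.-1 ltac:(lia) Ha.
  split.
  + by rewrite EL; apply: msum_perm.
  + by rewrite EL; apply: msum_pat.
  + rewrite EL; apply: (pat_sub _ (reg_cat_sub tau (a := a) (b := b) (aL := c) (bL := b) (aR := a) (bR := c.-1) Hi Hh' _ _ _ _)); try lia.
    apply: msum_pat => //.
    by apply/allrelP => x y /reg_vals Hx /reg_vals Hy; lia.
  + move=> p Hp Hq.
    have [k [t1 [t2 [Q1 Q2 Sub [O1 O2] Rt]]]] := pat_split (up:=false) Hp Hrel Hq.
    move/allrelP: Rt => Rt.
    move: Sub; rewrite reg_sub all_cat => /andP [/andP [A1 A2] Sub].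
    have [h1 [Hh1 Sp1 Sp2]] := pos_split_ex (tau := tau) Hi Eij' Sub.
    set c1 := maxn a (foldr maxn 0 t2).+1.
    have Mb : foldr maxn 0 t2 < b.+1.
      by apply: maxl_lt => // x Hx; have := allP A2 x Hx; plia.
    have Hc1 : a <= c1 <= b.+1 by rewrite /c1; move: Mb Eab; plia.
    have h1pos : 0 < h1 by move: Hi Hh1; plia.
    have c1pos : 0 < c1 by rewrite /c1; plia.
    have T2 : subseq t2 (reg tau h1 j a c1.-1).
      apply: sub_reg Sp2; apply/allP => x Hx.
      by have := maxl_ge Hx; have := allP A2 x Hx; rewrite /c1; plia.
    have T1 : subseq t1 (reg tau i h1.-1 c1 b).
      apply: sub_reg Sp1; apply/allP => y Hy.
      have := allP A1 y Hy => /= Ay.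
      have : foldr maxn 0 t2 < y by apply: maxl_lt; [move: Ay Ha; plia | move=> x Hx; exact: Rt].
      rewrite /c1; move: Ay; plia.
    have [_ _ _ U1] := IL i h1.-1 c1 b Hi c1pos.
    have [_ _ _ U2] := IR h1 j a c1.-1 h1pos Ha.
    have := U1 _ Q1 (pat_of T1 O1); have := U2 _ Q2 (pat_of T2 O2).
    have := HLmax _ (memS h1 c1 Hh1 Hc1).
    have -> : size p = size (take k p) + size (drop k p) by rewrite -size_cat cat_take_drop.
    rewrite /msum size_cat size_map => A B C; exact: leq_trans (leq_add C B) A.
Qed.

Lemma reg_full tau : is_perm tau -> reg tau 1 (size tau) 1 (size tau) = tau.
Proof.
move=> Pt.
have Ep : pos tau 1 (size tau) = tau.
  rewrite /pos /index_iota subn1 /=.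
  have -> : iota 1 (size tau) = map (addn 1) (iota 0 (size tau)) by rewrite -iotaDl.
  rewrite -map_comp -[in RHS](mkseq_nth 0 tau) /mkseq; apply: eq_map => x /=.
  by [].
rewrite /reg Ep; apply/all_filterP/allP => x Hx.
exact: perm_vals Pt Hx.
Qed.

Unset Implicit Arguments.
Theorem proposition3 (sigma tau : seq nat) (T : tree)
    (Longest : seq (seq nat) -> seq nat) :
  longest_selector Longest ->
  separable sigma ->
  separating_tree sigma T ->
  is_perm tau ->
  longest_common_pattern (M tau Longest T 1 (size tau) 1 (size tau)) sigma tau.
Proof.
move=> HL _ /andP [/eqP En Hsep] Pt.
have [P1 P2 P3 P4] := main tau HL Hsep
  ltac:(by rewrite add0n En) (size tau) (size tau) (isT : 0 < 1) (isT : 0 < 1).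
have Eb : block sigma 0 (nleaves T) = sigma by rewrite /block drop0 En take_size.
rewrite Eb reg_full // in P2 P3 P4.
split => // p _; exact: P4.
Qed.
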